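(* Let $\Gamma$ be a bipartite graph with vertex partition $V(\Gamma)=X\cup Y$, $X=\{x_1,\dots,x_{|X|}\}$ nonempty. Suppose that $d(x_i)=s_i$ for $1\le i\le |X|$, that $d(y)=k$ for all $y\in Y$, and that every pair of distinct vertices $y_1,y_2\in Y$ with $d_\Gamma(y_1,y_2)=2$ has exactly $\mu$ common neighbours. Then $$(|Y|-1)\mu\ \ge\ k\left(\frac{|Y|\cdot k}{|X|}-1\right),$$ with equality if and only if $s_1=s_2=\cdots=s_{|X|}$ and every pair of distinct vertices of $Y$ is at distance $2$.
   Context: $d(v)$ denotes the valency of a vertex $v$ and $d_\Gamma(\cdot,\cdot)$ the distance in $\Gamma$. *)

(* Defs.v *)
From mathcomp Require Import all_boot all_order all_algebra.
Set Implicit Arguments. Unset Strict Implicit. Unset Printing Implicit Defensive.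
Import Order.TTheory GRing.Theory Num.Theory.

Definition simple_graph (T : finType) (e : rel T) : Prop :=
  symmetric e /\ irreflexive e.

Definition deg (T : finType) (e : rel T) (v : T) : nat := #|[set z | e v z]|.

Definition ncommon (T : finType) (e : rel T) (u v : T) : nat :=
  #|[set z | e u z && e v z]|.

Definition walk_len (T : finType) (e : rel T) (u v : T) (n : nat) : Prop :=
  exists p : seq T, [/\ path e u p, last u p = v & size p = n].

Definition dist_is (T : finType) (e : rel T) (u v : T) (n : nat) : Prop :=
  walk_len e u v n /\ forall m, (m < n)%N -> ~ walk_len e u v m.

Definition bipartition (T : finType) (e : rel T) (X Y : {set T}) : Prop :=
  [/\ [disjoint X & Y], X :|: Y = [set: T] &
      forall u v, e u v -> (u \in X) = (v \in Y)].

(* Main.v *)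
Require Import Defs.
From mathcomp Require Import all_boot all_order all_algebra.
From mathcomp Require Import ring.
Import Order.TTheory GRing.Theory Num.Theory.
Local Open Scope ring_scope.

Lemma sumsq_id (I : finType) (A : pred I) (F : I -> rat) :
  \sum_(i in A) \sum_(j in A) (F i - F j) ^+ 2 =
  2 * #|A|%:R * \sum_(i in A) F i ^+ 2 - 2 * (\sum_(i in A) F i) ^+ 2.
Proof.
transitivity (\sum_(i in A) (#|A|%:R * F i ^+ 2 + \sum_(j in A) F j ^+ 2
                 - 2 * F i * \sum_(j in A) F j)).
  apply: eq_bigr => i _.
  rewrite mulr_sumr mulr_natl -sumr_const -!big_split -sumrB /=.
  by apply: eq_bigr => j _; ring.
rewrite sumrB big_split /= -mulr_sumr sumr_const -mulr_natr -mulr_suml -mulr_natr -mulr_sumr.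
ring.
Qed.

Lemma sum_eq0_in (I : finType) (A : pred I) (F : I -> rat) :
  (forall i, A i -> 0 <= F i) -> \sum_(i | A i) F i = 0 -> forall i, A i -> F i = 0.
Proof.
move=> H0 Hs i Ai; move: Hs; rewrite (bigD1 i) //=; move/eqP.
rewrite paddr_eq0 ?H0 //; first by case/andP => /eqP.
by apply: sumr_ge0 => j /andP[? _]; exact: H0.
Qed.
Arguments sum_eq0_in {I A F}.

Lemma card_sum_in (T : finType) (P : pred T) (A : {pred T}) :
  (forall z, P z -> z \in A) -> #|[set z | P z]| = (\sum_(z in A) (P z : nat))%N.
Proof.
move=> H; rewrite -sum1_card big_mkcond [RHS]big_mkcond /=.
apply: eq_bigr => z _; rewrite inE.
by case: (boolP (P z)) => Pz; [rewrite (H z Pz) | case: (z \in A)].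
Qed.

Theorem lemma3p2 (T : finType) (e : rel T) (X Y : {set T}) (k mu : nat) :
  simple_graph e -> bipartition e X Y ->
  X != set0 -> Y != set0 -> (0 < mu)%N ->
  (forall y, y \in Y -> deg e y = k) ->
  (forall y1 y2, y1 \in Y -> y2 \in Y -> y1 != y2 -> dist_is e y1 y2 2 ->
     ncommon e y1 y2 = mu) ->
  let lhs : rat := (#|Y|%:R - 1) * mu%:R in
  let rhs : rat := k%:R * (#|Y|%:R * k%:R / #|X|%:R - 1) in
  lhs >= rhs /\
  (lhs = rhs <->
     ((forall x1 x2, x1 \in X -> x2 \in X -> deg e x1 = deg e x2) /\
      (forall y1 y2, y1 \in Y -> y2 \in Y -> y1 != y2 -> dist_is e y1 y2 2))).
Proof.
move=> [sym irr] [dis cov hXY] XN YN mu0 degY ncY lhs rhs.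
have nbX x z : x \in X -> e x z -> z \in Y by move=> xX exz; rewrite -(hXY _ _ exz).
have nbY y z : y \in Y -> e y z -> z \in X.
  by move=> yY eyz; rewrite (hXY z y) // sym.
have degX x : x \in X -> deg e x = (\sum_(y in Y) (e x y : nat))%N.
  by move=> xX; apply: card_sum_in => z; apply: nbX.
have degYs y : y \in Y -> deg e y = (\sum_(x in X) (e y x : nat))%N.
  by move=> yY; apply: card_sum_in => z; apply: nbY.
have ncs y1 y2 : y1 \in Y -> ncommon e y1 y2 = (\sum_(x in X) (e y1 x && e y2 x : nat))%N.
  by move=> yY; apply: card_sum_in => z /andP[h _]; apply: (nbY y1).
have ncdiag y : ncommon e y y = deg e y.
  by rewrite /ncommon /deg; apply: eq_card => z; rewrite !inE andbb.
have dist2 y1 y2 z : y1 \in Y -> y2 \in Y -> y1 != y2 -> e y1 z -> e y2 z ->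
    dist_is e y1 y2 2.
  move=> y1Y y2Y ne e1 e2; split.
    by exists [:: z; y2]; rewrite /= e1 sym e2.
  move=> m; case: m => [|[|//]] _ [p [hp hl hs]].
    by case: p hp hl hs => // _ /eqP; rewrite (negbTE ne).
  case: p hp hl hs => [//|w [|//]] /= /andP[ew _] hw _; subst w.
  have := hXY _ _ ew; rewrite y2Y (disjointFl dis y1Y) //.
have HS : (\sum_(x in X) deg e x = #|Y| * k)%N.
  transitivity (\sum_(x in X) \sum_(y in Y) (e x y : nat))%N.
    by apply: eq_bigr => x xX; apply: degX.
  rewrite exchange_big /= -sum_nat_const; apply: eq_bigr => y yY.
  by rewrite -(degY y yY) degYs //; apply: eq_bigr => x _; rewrite sym.
have HQ : (\sum_(y1 in Y) \sum_(y2 in Y) ncommon e y1 y2 =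
            \sum_(x in X) deg e x * deg e x)%N.
  transitivity (\sum_(y1 in Y) \sum_(y2 in Y) \sum_(x in X) (e y1 x * e y2 x))%N.
    apply: eq_bigr => y1 y1Y; apply: eq_bigr => y2 _; rewrite ncs //.
    by apply: eq_bigr => x _; case: (e y1 x); case: (e y2 x).
  transitivity (\sum_(x in X) \sum_(y1 in Y) \sum_(y2 in Y) (e y1 x * e y2 x))%N.
    rewrite (eq_bigr (fun y1 => \sum_(x in X) \sum_(y2 in Y) (e y1 x * e y2 x))%N);
      last by move=> y1 _; rewrite exchange_big.
    by rewrite exchange_big.
  apply: eq_bigr => x xX; rewrite -big_distrlr /= degX //.
  by congr (_ * _)%N; apply: eq_bigr => y _; rewrite sym.
have nn0 : (#|X|%:R : rat) != 0 by rewrite pnatr_eq0 -lt0n card_gt0.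
have mn0 : (#|Y|%:R : rat) != 0 by rewrite pnatr_eq0 -lt0n card_gt0.
set n : rat := #|X|%:R; set m : rat := #|Y|%:R.
set S : rat := \sum_(x in X) (deg e x)%:R.
set Q : rat := \sum_(x in X) (deg e x)%:R ^+ 2.
have HSr : S = m * k%:R by rewrite /S -natr_sum HS natrM.
have HQr : \sum_(y1 in Y) \sum_(y2 in Y) (ncommon e y1 y2)%:R = Q.
  rewrite /Q; under eq_bigr => y1 _ do rewrite -natr_sum.
  by rewrite -natr_sum HQ natr_sum; apply: eq_bigr => x _; rewrite natrM expr2.
set g := fun y1 y2 : T => (if y1 == y2 then k else mu).
set E : rat := \sum_(y1 in Y) \sum_(y2 in Y) ((g y1 y2)%:R - (ncommon e y1 y2)%:R).
have HE : E = m * k%:R + m * (m - 1) * mu%:R - Q.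
  rewrite /E; under eq_bigr => y1 _ do rewrite sumrB.
  rewrite sumrB HQr; congr (_ - _).
  transitivity (\sum_(y1 in Y) (k%:R + (m - 1) * mu%:R : rat)).
    apply: eq_bigr => y1 y1Y.
    have hm : \sum_(y2 in Y) (mu%:R : rat) = mu%:R + \sum_(y2 in Y | y2 != y1) (mu%:R : rat) by rewrite (bigD1 y1).
    rewrite (bigD1 y1) //= /g eqxx; congr (_ + _).
    transitivity (\sum_(y2 in Y | y2 != y1) (mu%:R : rat)).
      by apply: eq_bigr => y2 /andP[_ ne]; rewrite eq_sym (negbTE ne).
    apply: (addrI mu%:R); rewrite -hm sumr_const -[_ *+ #|Y|]mulr_natr /m; ring.
  by rewrite sumr_const -[_ *+ #|Y|]mulr_natr /m; ring.
set C : rat := \sum_(x1 in X) \sum_(x2 in X) ((deg e x1)%:R - (deg e x2)%:R) ^+ 2.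
have HC : C = 2 * n * Q - 2 * S ^+ 2 by rewrite /C sumsq_id.
have key : lhs - rhs = (n * E + C / 2) / (m * n).
  rewrite HE HC HSr /lhs /rhs -/n -/m; field.
  by rewrite nn0 mn0.
have Dge0 y1 y2 : y1 \in Y -> y2 \in Y -> 0 <= ((g y1 y2)%:R - (ncommon e y1 y2)%:R : rat).
  move=> y1Y y2Y; rewrite subr_ge0 ler_nat /g.
  case: eqP => [<-|/eqP ne]; first by rewrite ncdiag degY.
  case: (posnP (ncommon e y1 y2)) => [->//|/card_gt0P [z]].
  rewrite inE => /andP[e1 e2].
  by rewrite (ncY _ _ y1Y y2Y ne (dist2 _ _ _ y1Y y2Y ne e1 e2)).
have Ege0 : 0 <= E.
  by apply: sumr_ge0 => y1 y1Y; apply: sumr_ge0 => y2 y2Y; apply: Dge0.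
have Cge0 : 0 <= C.
  by apply: sumr_ge0 => x1 _; apply: sumr_ge0 => x2 _; apply: sqr_ge0.
have n0 : 0 < n by rewrite lt_def nn0 /n ler0n.
have m0 : 0 < m by rewrite lt_def mn0 /m ler0n.
split.
  rewrite -subr_ge0 key; apply: divr_ge0; last by apply: mulr_ge0; apply: ltW.
  by apply: addr_ge0; [apply: mulr_ge0 => //; apply: ltW | apply: divr_ge0].
have eqE : lhs = rhs <-> E = 0 /\ C = 0.
  rewrite -[lhs = rhs]/(lhs = rhs); split.
    move/eqP; rewrite -subr_eq0 key mulf_eq0 invr_eq0 mulf_eq0 (negbTE nn0) (negbTE mn0) /=.
    rewrite orbF paddr_eq0; last by apply: divr_ge0.
      by case/andP; rewrite mulf_eq0 (negbTE nn0) mulf_eq0 invr_eq0 /= orbF => /eqP -> /eqP ->.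
    by apply: mulr_ge0 => //; apply: ltW.
  by move=> [E0 C0]; apply/eqP; rewrite -subr_eq0 key E0 C0 !mul0r mulr0 addr0 mul0r.
rewrite eqE; split.
  move=> [E0 C0]; split.
    move=> x1 x2 x1X x2X.
    have h1 := sum_eq0_in (fun x _ => sumr_ge0 _ (fun y _ => sqr_ge0 _)) C0 x1 x1X.
    have := sum_eq0_in (fun y _ => sqr_ge0 _) h1 x2 x2X.
    by move/eqP; rewrite sqrf_eq0 subr_eq0 eqr_nat => /eqP.
  move=> y1 y2 y1Y y2Y ne.
  have h1 := sum_eq0_in (fun y1 y1Y => sumr_ge0 _ (fun y2 y2Y => Dge0 y1 y2 y1Y y2Y)) E0 y1 y1Y.
  have := sum_eq0_in (fun y2 y2Y => Dge0 y1 y2 y1Y y2Y) h1 y2 y2Y.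
  move/eqP; rewrite subr_eq0 eqr_nat /g eq_sym (negbTE ne) eq_sym => /eqP nc.
  have : (0 < ncommon e y1 y2)%N by rewrite -nc.
  rewrite /ncommon.
  case/card_gt0P => z; rewrite inE => /andP[e1 e2]; exact: dist2 e1 e2.
move=> [Hd Hdist]; split.
  apply: big1 => y1 y1Y; apply: big1 => y2 y2Y; apply/eqP; rewrite subr_eq0 eqr_nat /g.
  case: (eqVneq y1 y2) => [<-|ne]; first by rewrite ncdiag degY.
  by rewrite ncY // ?eqxx //; apply: Hdist.
by apply: big1 => x1 x1X; apply: big1 => x2 x2X; rewrite (Hd x1 x2) // subrr expr0n.
Qed.
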